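(* Let $\delta$ be a metric on $[a,b]$, let $f:[a,b]\to\mathbb{R}^d$ be Borel measurable and let $g:[a,b]\to\mathbb{R}^d$ satisfy $\|g(t)-g(s)\|\le\mathsf{C}_g\,\delta(t,s)$ for all $s,t\in[a,b]$, for some constant $\mathsf{C}_g>0$. Then for every Borel set $E\subseteq[a,b]$, $$\dim_{\rho_\delta}(Gr_E(f+g))=\dim_{\rho_\delta}(Gr_E(f)).$$
   Context: $\rho_\delta((s,x),(t,y)):=\max\{\delta(s,t),\|x-y\|\}$ on $[a,b]\times\mathbb{R}^d$; for a metric $\rho$, $\mathcal{H}^\beta_\rho(G):=\lim_{\eta\to0}\inf\{\sum_n(2r_n)^\beta: G\subseteq\bigcup_n B_\rho(x_n,r_n),\ r_n\le\eta\}$ and $\dim_\rho(G):=\sup\{\beta>0:\mathcal{H}^\beta_\rho(G)>0\}$. $Gr_E(h):=\{(t,h(t)):t\in E\}$. In the paper $\delta$ is the canonical metric of a Gaussian process. *)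

(* Defs.v *)
From HB Require Import structures.
From mathcomp Require Import all_boot all_order all_algebra.
From mathcomp Require Import all_classical all_reals all_analysis.
Set Implicit Arguments. Unset Strict Implicit. Unset Printing Implicit Defensive.
Import Order.TTheory GRing.Theory Num.Theory.
Import numFieldNormedType.Exports.
Local Open Scope classical_set_scope.
Local Open Scope ring_scope.

Section Defs.
Variables (R : realType) (d : nat).

Definition eucl (x : 'rV[R]_d) : R := Num.sqrt (\sum_(i < d) (x ord0 i) ^+ 2).

Definition is_metric_on (A : set R) (delta : R -> R -> R) : Prop :=
  (forall s t, A s -> A t -> 0 <= delta s t) /\
  (forall s t, A s -> A t -> (delta s t = 0 <-> s = t)) /\
  (forall s t, A s -> A t -> delta s t = delta t s) /\
  (forall s t u, A s -> A t -> A u -> delta s u <= delta s t + delta t u).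

Definition rho (delta : R -> R -> R) (p q : R * 'rV[R]_d) : R :=
  Num.max (delta p.1 q.1) (eucl (p.2 - q.2)).

Definition rball (delta : R -> R -> R) (c : R * 'rV[R]_d) (r : R) :=
  [set p | rho delta c p < r].

Definition cover_sums (a b : R) (delta : R -> R -> R) (beta eta : R)
    (G : set (R * 'rV[R]_d)) : set (\bar R) :=
  [set S | exists (c : nat -> R * 'rV[R]_d) (r : nat -> R),
     (forall n, (c n).1 \in `[a, b]) /\ (forall n, 0 < r n <= eta) /\
     G `<=` \bigcup_n rball delta (c n) (r n) /\
     S = (\sum_(0 <= n <oo) ((2 * r n) `^ beta)%:E)%E].

(* H^beta_rho(G) = lim_{eta -> 0} inf{...}; the inf is nonincreasing in eta,
   so the limit is the supremum over eta > 0. *)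
Definition hausdorff (a b : R) (delta : R -> R -> R) (beta : R)
    (G : set (R * 'rV[R]_d)) : \bar R :=
  ereal_sup [set ereal_inf (cover_sums a b delta beta eta G) | eta in [set eta : R | 0 < eta]].

Definition hdim (a b : R) (delta : R -> R -> R) (G : set (R * 'rV[R]_d)) : \bar R :=
  ereal_sup [set beta%:E | beta in [set beta : R | 0 < beta /\ (0 < hausdorff a b delta beta G)%E]].

Definition graph_on (E : set R) (h : R -> 'rV[R]_d) : set (R * 'rV[R]_d) :=
  [set (t, h t) | t in E].

Definition borel_fun_on (A : set R) (f : R -> 'rV[R]_d) : Prop :=
  forall U : set 'rV[R]_d, open U -> measurable (A `&` f @^-1` U).

End Defs.

(* Main.v *)
Require Import Defs.
From HB Require Import structures.
From mathcomp Require Import all_boot all_order all_algebra.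
From mathcomp Require Import all_classical all_reals all_analysis.
From mathcomp Require Import lra.
Import Order.TTheory GRing.Theory Num.Theory.
Import numFieldNormedType.Exports.
Local Open Scope classical_set_scope.
Local Open Scope ring_scope.

Lemma eucl_ge0 (R : realType) (d : nat) (x : 'rV[R]_d) : 0 <= eucl x.
Proof. exact: sqrtr_ge0. Qed.
Arguments eucl_ge0 {R d}.

Lemma euclN (R : realType) (d : nat) (x : 'rV[R]_d) : eucl (- x) = eucl x.
Proof.
rewrite /eucl; congr Num.sqrt; apply: eq_bigr => i _.
by rewrite mxE sqrrN.
Qed.
Arguments euclN {R d}.

Lemma eucl_add (R : realType) (d : nat) (u v : 'rV[R]_d) :
  eucl (u + v) <= 2 * (eucl u + eucl v).
Proof.
have hu := eucl_ge0 u; have hv := eucl_ge0 v.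
have su : eucl u ^+ 2 = \sum_(i < d) (u ord0 i) ^+ 2.
  by rewrite sqr_sqrtr // sumr_ge0 // => i _; exact: sqr_ge0.
have sv : eucl v ^+ 2 = \sum_(i < d) (v ord0 i) ^+ 2.
  by rewrite sqr_sqrtr // sumr_ge0 // => i _; exact: sqr_ge0.
move: su sv hu hv; set x := eucl u; set y := eucl v => su sv hu hv.
rewrite -[X in _ <= X]ger0_norm; last by lra.
rewrite -sqrtr_sqr /eucl ler_sqrt; last exact: sqr_ge0.
apply: (@le_trans _ _ (2 * (x ^+ 2 + y ^+ 2))); last first.
  have := mulr_ge0 hu hv; rewrite !expr2; nra.
rewrite su sv -big_split /= mulr_sumr; apply: ler_sum => i _.
rewrite mxE; move: (u ord0 i) (v ord0 i) => p q.
have := sqr_ge0 (p - q); rewrite !expr2; nra.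
Qed.
Arguments eucl_add {R d}.

Lemma hdim_le (R : realType) (d : nat) (a b : R) (delta : R -> R -> R)
    (f g : R -> 'rV[R]_d) (Cg : R) :
  0 < Cg ->
  (forall s t, s \in `[a, b] -> t \in `[a, b] -> eucl (g t - g s) <= Cg * delta t s) ->
  forall E : set R, E `<=` [set` `[a, b]] ->
    (hdim a b delta (graph_on E (f \+ g)%R) <= hdim a b delta (graph_on E f))%E.
Proof.
move=> Cg0 Hg E HE.
apply: ereal_sup_le => _ [beta [beta0 Hpos] <-]; exists beta => //; split => //.
rewrite ltNge; apply/negP => Hle.
move: Hpos; apply/negP; rewrite -leNgt.
apply: ge_ereal_sup => _ [eta' eta'0 <-].
set K := 2 * (1 + Cg).
have K0 : 0 < K by rewrite /K; lra.
set eta := eta' / K.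
have eta0 : 0 < eta by rewrite /eta divr_gt0.
have Hf : (ereal_inf (cover_sums a b delta beta eta (graph_on E f)) <= 0)%E.
  apply: (le_trans _ Hle); apply: ereal_sup_ubound; by exists eta.
have Kb0 : 0 < K `^ beta by exact: powR_gt0.
apply/lee_addgt0Pr => e e0; rewrite add0e.
have : (ereal_inf (cover_sums a b delta beta eta (graph_on E f)) < (e / K `^ beta)%:E)%E.
  by apply: le_lt_trans Hf _; rewrite lte_fin divr_gt0.
case/ereal_inf_lt => _ [c [r [Hc [Hr [Hcov ->]]]]] HS.
have Hmem : cover_sums a b delta beta eta' (graph_on E (f \+ g)%R)
    (\sum_(0 <= n <oo) ((2 * (K * r n)) `^ beta)%:E)%E.
  exists (fun n => ((c n).1, (c n).2 + g (c n).1)), (fun n => K * r n).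
  split; first by [].
  split.
    move=> n; have /andP[rn0 rneta] := Hr n.
    rewrite mulr_gt0 //=.
    have -> : eta' = K * eta by rewrite /eta mulrC divfK ?gt_eqF.
    by rewrite ler_pM2l.
  split => //.
  move=> _ [t Et <-].
  have [n _ Hn] := Hcov (t, f t) (ex_intro2 _ _ t Et erefl).
  exists n => //.
  move: Hn; rewrite /rball /rho /= gt_max => /andP[h1 h2].
  have /andP[rn0 _] := Hr n.
  have tab : t \in `[a, b] by exact: HE.
  have hg := Hg t (c n).1 tab (Hc n).
  have hsum := eucl_add ((c n).2 - f t) (g (c n).1 - g t).
  have -> : (c n).2 + g (c n).1 - (f t + g t) = ((c n).2 - f t) + (g (c n).1 - g t).
    by rewrite opprD addrACA.
  have hCd : Cg * delta (c n).1 t < Cg * r n by rewrite ltr_pM2l.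
  have hCr : 0 < Cg * r n by rewrite mulr_gt0.
  rewrite gt_max; apply/andP; split; rewrite /K; lra.
apply: (le_trans (ereal_inf_lbound Hmem)).
rewrite (eq_eseriesr (g := fun n => ((K `^ beta)%:E * ((2 * r n) `^ beta)%:E)%E)); last first.
  move=> i _; have /andP[ri0 _] := Hr i.
  have h2r : 0 <= 2 * r i by rewrite mulr_ge0 // ltW.
  by rewrite mulrCA (powRM _ (ltW K0) h2r) EFinM.
rewrite nneseriesZl; last by move=> i _; rewrite lee_fin powR_ge0.
apply: le_trans (lee_wpmul2l _ (ltW HS)) _.
  by rewrite lee_fin ltW.
by rewrite -EFinM mulrC divfK // gt_eqF.
Qed.

Arguments hdim_le {R d a b delta f g Cg}.

Theorem lemma3p8 (R : realType) (d : nat) (a b : R) (delta : R -> R -> R)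
    (f g : R -> 'rV[R]_d) (Cg : R) :
  a < b ->
  is_metric_on [set` `[a, b]] delta ->
  borel_fun_on [set` `[a, b]] f ->
  0 < Cg ->
  (forall s t, s \in `[a, b] -> t \in `[a, b] -> eucl (g t - g s) <= Cg * delta t s) ->
  forall E : set R, measurable E -> E `<=` [set` `[a, b]] ->
    hdim a b delta (graph_on E (f \+ g)) = hdim a b delta (graph_on E f).
Proof.
move=> _ _ _ Cg0 Hg E _ HE.
apply: le_anti; apply/andP; split; first exact: (hdim_le Cg0 Hg E HE).
have Hg' : forall s t, s \in `[a, b] -> t \in `[a, b] ->
    eucl ((fun x => - g x) t - (fun x => - g x) s) <= Cg * delta t s.
  move=> s t hs ht /=; rewrite -opprD euclN; exact: Hg.
have H2 := @hdim_le R d a b delta (f \+ g)%R (fun x => - g x) Cg Cg0 Hg' E HE.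
have Hfe : ((f \+ g) \+ (fun x => - g x))%R = f.
  by apply/funext => t /=; rewrite addrK.
by rewrite Hfe in H2.
Qed.
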